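(* Let $3\le a<b$ be integers and for $z\in(0,1)$ let $g(z,a,b)=f(z)(b-1)(a-1)+\frac{1}{1-z}+2-b-a$. Then: (i) as a function of $z\in(0,1)$, $g$ is strictly decreasing, attains a global minimum, and is strictly increasing afterwards; the global minimum point is the only point where $\partial g/\partial z=0$; (ii) $g(z)>0$ for all $z\in(0,z_l]$; (iii) $g(z)>0$ for all $z\in[z_r,1)$; (iv) if $\min_{z} g(z)<0$, then $g$ has exactly two roots $z_1<z_2$ in $(0,1)$, and $z_1,z_2\in(z_l,z_r)$; (v) for every $z\in(z_l,1)$, $g(z,a,b)>g(z,a,b+1)$; (vi) for each fixed $a\ge3$ there is a threshold $b'\ge a+1$ such that $\min_z g(z,a,b)\ge 0$ for all $b$ with $a<b<b'$, and $\min_z g(z,a,b)<0$ for all $b\ge b'$.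
   Context: $f(z)=\frac{-\ln(1-z)(1-z)}{z}$ for $z\in(0,1)$ (a strictly decreasing bijection onto $(0,1)$). $z_l$ is the unique $z\in(0,1)$ with $f(z)=\frac1{a-1}$, and $z_r$ the unique $z\in(0,1)$ with $f(z)=\frac1{b-1}$ (these depend on $a$, resp. $b$). *)

(* Defs.v *)
From Stdlib Require Import Reals Lra.
Open Scope R_scope.

Definition fz (z : R) : R := - ln (1 - z) * (1 - z) / z.

Definition gz (z a b : R) : R :=
  fz z * (b - 1) * (a - 1) + 1 / (1 - z) + 2 - b - a.

(* Main.v *)
Require Import Defs.
From Stdlib Require Import Reals Lra Psatz Lia.
From Coquelicot Require Import Coquelicot.
Local Open Scope R_scope.

Definition Lz (z:R) := - ln (1 - z).
Definition Sz (z:R) := (Lz z - z) * (1 - z)^2 / z^2.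
Definition Sd (z:R) := (1 - z) * (z^2 - 2 * (Lz z - z)) / z^3.
Definition gd (a b z : R) := (z - Lz z) / z^2 * (b - 1) * (a - 1) + 1 / (1 - z)^2.

Ltac dtac z := apply is_derive_Reals; auto_derive; [repeat split; try lra; nra | ];
  repeat replace (1 + - z) with (1 - z) by ring; field; repeat split; lra.

Lemma dL z : z < 1 -> derivable_pt_lim Lz z (1/(1-z)).
Proof. intros H. unfold Lz. dtac z. Qed.
Lemma dfz z : 0 < z < 1 -> derivable_pt_lim fz z ((z - Lz z)/z^2).
Proof. intros H. unfold fz, Lz. dtac z. Qed.
Lemma dSz z : 0 < z < 1 -> derivable_pt_lim Sz z (Sd z).
Proof. intros H. unfold Sz, Sd, Lz. dtac z. Qed.
Lemma dgz a b z : 0 < z < 1 -> derivable_pt_lim (fun t => gz t a b) z (gd a b z).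
Proof. intros H. unfold gz, gd, fz, Lz. dtac z. Qed.
Lemma dk z : z < 1 -> derivable_pt_lim (fun t => Lz t - t - t^2/2) z (1/(1-z) - 1 - z).
Proof. intros H. unfold Lz. dtac z. Qed.
Lemma dm z : z < 1 -> derivable_pt_lim (fun t => t/(1-t) - Lz t) z (1/(1-z)^2 - 1/(1-z)).
Proof. intros H. unfold Lz. dtac z. Qed.
Lemma mono_inc (f f' : R -> R) x y : x < y ->
  (forall c, x <= c <= y -> derivable_pt_lim f c (f' c)) ->
  (forall c, x < c < y -> 0 < f' c) -> f x < f y.
Proof.
  intros Hxy Hd Hp. destruct (MVT_cor2 f f' x y Hxy Hd) as [c [Hc Hr]].
  specialize (Hp c Hr). nra.
Qed.
Lemma mono_dec (f f' : R -> R) x y : x < y ->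
  (forall c, x <= c <= y -> derivable_pt_lim f c (f' c)) ->
  (forall c, x < c < y -> f' c < 0) -> f y < f x.
Proof.
  intros Hxy Hd Hp. destruct (MVT_cor2 f f' x y Hxy Hd) as [c [Hc Hr]].
  specialize (Hp c Hr). nra.
Qed.

Lemma Lz0 : Lz 0 = 0.
Proof. unfold Lz. replace (1 - 0) with 1 by ring. rewrite ln_1. ring. Qed.

Lemma Llow z : 0 < z < 1 -> z + z^2/2 < Lz z.
Proof.
  intros H.
  assert (H0 : (fun t => Lz t - t - t^2/2) 0 < (fun t => Lz t - t - t^2/2) z);
   [|cbv beta in H0; rewrite Lz0 in H0; lra].
  apply (mono_inc (fun t => Lz t - t - t^2/2) (fun c => 1/(1-c) - 1 - c)).
  - lra.
  - intros c Hc. apply dk. lra.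
  - intros c Hc. assert (E: 1/(1-c) * (1-c) = 1) by (field; lra). nra.
Qed.

Lemma Lup z : 0 < z < 1 -> Lz z * (1 - z) < z.
Proof.
  intros H.
  assert (H0 : (fun t => t/(1-t) - Lz t) 0 < (fun t => t/(1-t) - Lz t) z).
  { apply (mono_inc (fun t => t/(1-t) - Lz t) (fun c => 1/(1-c)^2 - 1/(1-c))).
    - lra.
    - intros c Hc. apply dm. lra.
    - intros c Hc. assert (E: 1/(1-c) * (1-c) = 1) by (field; lra).
      replace (1/(1-c)^2) with ((1/(1-c))*(1/(1-c))) by (field; lra). nra. }
  cbv beta in H0. rewrite Lz0 in H0. assert (E: z/(1-z) * (1-z) = z) by (field; lra). nra.
Qed.

Lemma fz_eq z : fz z = Lz z * (1 - z) / z.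
Proof. reflexivity. Qed.

Lemma fz_pos z : 0 < z < 1 -> 0 < fz z.
Proof.
  intros H. rewrite fz_eq. pose proof (Llow z H).
  unfold Rdiv. apply Rmult_lt_0_compat; [nra | apply Rinv_0_lt_compat; lra].
Qed.

Lemma fdec x y : 0 < x -> x < y -> y < 1 -> fz y < fz x.
Proof.
  intros. apply (mono_dec fz (fun z => (z - Lz z)/z^2)); [lra| |].
  - intros c Hc. apply dfz. lra.
  - intros c Hc. pose proof (Llow c ltac:(lra)).
    unfold Rdiv. assert (0 < / c^2) by (apply Rinv_0_lt_compat; apply pow_lt; lra). nra.
Qed.

Lemma fdec' x y : 0 < x -> x <= y -> y < 1 -> fz y <= fz x.
Proof. intros. destruct (Req_dec x y). subst; lra. left; apply fdec; lra. Qed.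

Lemma Sdec x y : 0 < x -> x < y -> y < 1 -> Sz y < Sz x.
Proof.
  intros. apply (mono_dec Sz Sd); [lra| |].
  - intros c Hc. apply dSz. lra.
  - intros c Hc. pose proof (Llow c ltac:(lra)). unfold Sd, Rdiv.
    assert (0 < / c^3) by (apply Rinv_0_lt_compat; apply pow_lt; lra).
    assert ((1 - c) * (c ^ 2 - 2 * (Lz c - c)) < 0) by nra. nra.
Qed.

Lemma Slow z : 0 < z < 1 -> (1-z)^2/2 < Sz z.
Proof.
  intros H. pose proof (Llow z H). unfold Sz, Rdiv.
  assert (E: z^2 * / z^2 = 1) by (field; lra).
  assert (0 < / z^2) by (apply Rinv_0_lt_compat; apply pow_lt; lra).
  assert (z^2 * / 2 * (1-z)^2 < (Lz z - z) * (1 - z) ^ 2).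
  { apply Rmult_lt_compat_r. nra. lra. }
  nra.
Qed.

Lemma Sup z : 0 < z < 1 -> Sz z < 1 - z.
Proof.
  intros H. pose proof (Lup z H). unfold Sz, Rdiv.
  assert (E: z^2 * / z^2 = 1) by (field; lra).
  assert (0 < / z^2) by (apply Rinv_0_lt_compat; apply pow_lt; lra).
  assert ((Lz z - z) * (1 - z) ^ 2 < z^2 * (1-z)) by nra.
  nra.
Qed.

Lemma gd_eq a b z : 0 < z < 1 -> gd a b z = (1 - (a-1)*(b-1) * Sz z) / (1-z)^2.
Proof. intros H. unfold gd, Sz. field. lra. Qed.

Lemma cont_g a b t : 0 < t < 1 -> continuity_pt (fun t => gz t a b) t.
Proof. intros H. apply derivable_continuous_pt. exists (gd a b t). apply dgz; auto. Qed.

Lemma cont_S t : 0 < t < 1 -> continuity_pt Sz t.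
Proof. intros H. apply derivable_continuous_pt. exists (Sd t). apply dSz; auto. Qed.

Lemma Qpos z X : 0 < z < 1 -> 0 < X^2 * fz z - 2 * X + 1/(1-z).
Proof.
  intros H. pose proof (fz_pos z H). pose proof (Llow z H).
  assert (E: fz z * (1/(1-z)) * z = Lz z) by (rewrite fz_eq; field; repeat split; lra).
  assert (fz z * (1/(1-z)) > 1) by nra.
  assert (0 <= (fz z * X - 1)^2) by apply pow2_ge_0.
  nra.
Qed.
Lemma zm_exists a b : 3 <= a -> a < b ->
  exists zm, (0 < zm < 1) /\ Sz zm = 1 / ((a-1)*(b-1)).
Proof.
  intros Ha Hb. set (K := (a-1)*(b-1)).
  assert (HK : 4 < K) by (unfold K; nra).
  set (z1 := 1 - 1/K).
  assert (Hz1 : 3/4 < z1 < 1).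
  { unfold z1. assert (0 < 1/K < 1/4). { split. apply Rdiv_lt_0_compat; lra.
      apply Rmult_lt_reg_r with K. lra. unfold Rdiv. rewrite Rmult_assoc, Rinv_l; lra. }
    lra. }
  destruct (Ranalysis5.IVT_interv (fun t => 1/K - Sz t) (1/4) z1) as [zm [Hzm Heq]].
  - intros t Ht. apply continuity_pt_minus. apply continuity_pt_const. intros u v; reflexivity.
    apply cont_S. lra.
  - lra.
  - pose proof (Slow (1/4) ltac:(lra)).
    assert (1/K < 1/4). { apply Rmult_lt_reg_r with K. lra. unfold Rdiv. rewrite Rmult_assoc, Rinv_l; lra. }
    lra.
  - pose proof (Sup z1 ltac:(lra)). unfold z1 in *. lra.
  - exists zm. split. lra. cbv beta in Heq. lra.
Qed.

Lemma part_i a b : 3 <= a -> a < b ->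
  exists zm : R, (0 < zm /\ zm < 1) /\
     (forall x y, 0 < x -> x < y -> y <= zm -> gz y a b < gz x a b) /\
     (forall x y, zm <= x -> x < y -> y < 1 -> gz x a b < gz y a b) /\
     (forall z, (0 < z /\ z < 1) -> gz zm a b <= gz z a b) /\
     (forall z, (0 < z /\ z < 1) ->
        (derivable_pt_lim (fun t => gz t a b) z 0 <-> z = zm)).
Proof.
  intros Ha Hb. destruct (zm_exists a b Ha Hb) as [zm [Hzm HS]].
  set (K := (a-1)*(b-1)) in *.
  assert (HK : 4 < K) by (unfold K; nra).
  assert (neg : forall z, 0 < z < zm -> gd a b z < 0).
  { intros z Hz. rewrite gd_eq by lra. pose proof (Sdec z zm ltac:(lra) ltac:(lra) ltac:(lra)).
    fold K. assert (K * Sz z > 1). { assert (K * (1/K) = 1) by (field; lra). nra. }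
    unfold Rdiv. assert (0 < / (1-z)^2) by (apply Rinv_0_lt_compat; apply pow_lt; lra). nra. }
  assert (pos : forall z, zm < z < 1 -> 0 < gd a b z).
  { intros z Hz. rewrite gd_eq by lra. pose proof (Sdec zm z ltac:(lra) ltac:(lra) ltac:(lra)).
    fold K. assert (K * Sz z < 1). { assert (K * (1/K) = 1) by (field; lra). nra. }
    unfold Rdiv. assert (0 < / (1-z)^2) by (apply Rinv_0_lt_compat; apply pow_lt; lra). nra. }
  assert (zero : gd a b zm = 0).
  { rewrite gd_eq by lra. fold K. rewrite HS. field. split; lra. }
  assert (dec : forall x y, 0 < x -> x < y -> y <= zm -> gz y a b < gz x a b).
  { intros x y Hx Hxy Hy. apply (mono_dec (fun t => gz t a b) (gd a b)); [lra| |].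
    intros c Hc; apply dgz; lra. intros c Hc; apply neg; lra. }
  assert (inc : forall x y, zm <= x -> x < y -> y < 1 -> gz x a b < gz y a b).
  { intros x y Hx Hxy Hy. apply (mono_inc (fun t => gz t a b) (gd a b)); [lra| |].
    intros c Hc; apply dgz; lra. intros c Hc; apply pos; lra. }
  exists zm. split; [lra|]. split; [exact dec|]. split; [exact inc|]. split.
  - intros z Hz. destruct (Rtotal_order z zm) as [h|[h|h]].
    + left. apply dec; lra.
    + subst; lra.
    + left. apply inc; lra.
  - intros z Hz. split.
    + intros Hd. pose proof (uniqueness_limite _ _ _ _ Hd (dgz a b z Hz)).
      destruct (Rtotal_order z zm) as [h|[h|h]]; auto.
      * pose proof (neg z ltac:(lra)). lra.
      * pose proof (pos z ltac:(lra)). lra.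
    + intros ->. rewrite <- zero. apply dgz. lra.
Qed.

Lemma part_ii a b zl z : 1 < a -> a <= b -> 0 < zl < 1 -> fz zl = 1/(a-1) ->
  0 < z <= zl -> gz z a b > 0.
Proof.
  intros Ha Hb Hzl Hf Hz. pose proof (fdec' z zl ltac:(lra) ltac:(lra) ltac:(lra)).
  assert (E : fz zl * (a-1) = 1) by (rewrite Hf; field; lra).
  assert ((a-1) * fz z >= 1) by nra.
  pose proof (Qpos z (a-1) ltac:(lra)). unfold gz. nra.
Qed.

Lemma part_iii a b zr z : 1 < a -> a <= b -> 0 < zr < 1 -> fz zr = 1/(b-1) ->
  zr <= z < 1 -> gz z a b > 0.
Proof.
  intros Ha Hb Hzr Hf Hz. pose proof (fdec' zr z ltac:(lra) ltac:(lra) ltac:(lra)).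
  assert (E : fz zr * (b-1) = 1) by (rewrite Hf; field; lra).
  pose proof (fz_pos z ltac:(lra)).
  assert ((b-1) * fz z <= 1) by nra.
  pose proof (Qpos z (b-1) ltac:(lra)). unfold gz. nra.
Qed.

Lemma part_v a b zl z : 1 < a -> 0 < zl < 1 -> fz zl = 1/(a-1) ->
  zl < z < 1 -> gz z a b > gz z a (b+1).
Proof.
  intros Ha Hzl Hf Hz. pose proof (fdec zl z ltac:(lra) ltac:(lra) ltac:(lra)).
  assert (E : fz zl * (a-1) = 1) by (rewrite Hf; field; lra).
  assert ((a-1) * fz z < 1) by nra.
  unfold gz. nra.
Qed.
Lemma least_nat (P : nat -> Prop) n : P n -> exists m, P m /\ forall k, P k -> (m <= k)%nat.
Proof.
  induction n as [n IH] using (well_founded_induction Wf_nat.lt_wf). intros Hn.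
  destruct (Classical_Prop.classic (exists k, (k < n)%nat /\ P k)) as [[k [Hk Pk]]|Hno].
  - exact (IH k Hk Pk).
  - exists n. split; auto. intros k Pk. destruct (Nat.lt_ge_cases k n); auto.
    exfalso; apply Hno; eauto.
Qed.

Theorem lemma2 (a b : nat) (zl zr : R) :
  (3 <= a)%nat -> (a < b)%nat ->
  (0 < zl /\ zl < 1) -> fz zl = 1 / (INR a - 1) ->
  (0 < zr /\ zr < 1) -> fz zr = 1 / (INR b - 1) ->
  (* (i) *)
  (exists zm : R, (0 < zm /\ zm < 1) /\
     (forall x y, 0 < x -> x < y -> y <= zm ->
        gz y (INR a) (INR b) < gz x (INR a) (INR b)) /\
     (forall x y, zm <= x -> x < y -> y < 1 ->
        gz x (INR a) (INR b) < gz y (INR a) (INR b)) /\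
     (forall z, (0 < z /\ z < 1) -> gz zm (INR a) (INR b) <= gz z (INR a) (INR b)) /\
     (forall z, (0 < z /\ z < 1) ->
        (derivable_pt_lim (fun t => gz t (INR a) (INR b)) z 0 <-> z = zm))) /\
  (* (ii) *)
  (forall z, (0 < z /\ z <= zl) -> gz z (INR a) (INR b) > 0) /\
  (* (iii) *)
  (forall z, (zr <= z /\ z < 1) -> gz z (INR a) (INR b) > 0) /\
  (* (iv) *)
  ((exists z, (0 < z /\ z < 1) /\ gz z (INR a) (INR b) < 0) ->
     exists z1 z2, 0 < z1 /\ z1 < z2 /\ z2 < 1 /\
       gz z1 (INR a) (INR b) = 0 /\ gz z2 (INR a) (INR b) = 0 /\
       (forall z, (0 < z /\ z < 1) -> gz z (INR a) (INR b) = 0 -> z = z1 \/ z = z2) /\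
       zl < z1 /\ z2 < zr) /\
  (* (v) *)
  (forall z, (zl < z /\ z < 1) -> gz z (INR a) (INR b) > gz z (INR a) (INR (b + 1))) /\
  (* (vi) *)
  (exists b' : nat, (a + 1 <= b')%nat /\
     (forall b0 : nat, (a < b0)%nat -> (b0 < b')%nat ->
        forall z, (0 < z /\ z < 1) -> gz z (INR a) (INR b0) >= 0) /\
     (forall b0 : nat, (b' <= b0)%nat ->
        exists z, (0 < z /\ z < 1) /\ gz z (INR a) (INR b0) < 0)).
Proof.
  intros Ha Hab Hzl Hfl Hzr Hfr.
  assert (Ha3 : 3 <= INR a) by (apply le_INR in Ha; simpl in Ha; lra).
  assert (Hab' : INR a < INR b) by (apply lt_INR; auto).
  pose proof (part_i (INR a) (INR b) Ha3 Hab') as Hi.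
  assert (Hii : forall z, (0 < z /\ z <= zl) -> gz z (INR a) (INR b) > 0).
  { intros z Hz. apply (part_ii _ _ zl); auto; lra. }
  assert (Hiii : forall z, (zr <= z /\ z < 1) -> gz z (INR a) (INR b) > 0).
  { intros z Hz. apply (part_iii _ _ zr); auto; lra. }
  assert (Hv : forall b0, forall z, (zl < z /\ z < 1) -> gz z (INR a) (INR b0) > gz z (INR a) (INR (b0 + 1))).
  { intros b0 z Hz. replace (b0 + 1)%nat with (S b0) by lia. rewrite S_INR.
    apply (part_v _ _ zl); auto; lra. }
  split; [exact Hi|]. split; [exact Hii|]. split; [exact Hiii|]. split.
  - intros [z0 [Hz0 Hg0]].
    destruct Hi as [zm [Hzm [Hdec [Hinc [Hmin _]]]]].
    pose proof (Hmin z0 Hz0) as Hm.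
    assert (Hlm : zl < zm).
    { destruct (Rlt_le_dec zl zm) as [h|h]; auto. pose proof (Hii zm ltac:(lra)). lra. }
    assert (Hmr : zm < zr).
    { destruct (Rlt_le_dec zm zr) as [h|h]; auto. pose proof (Hiii zm ltac:(lra)). lra. }
    pose proof (Hii zl ltac:(lra)) as Gl. pose proof (Hiii zr ltac:(lra)) as Gr.
    destruct (Ranalysis5.IVT_interv (fun t => - gz t (INR a) (INR b)) zl zm) as [z1 [Hz1 E1]].
    { intros t Ht. apply continuity_pt_opp. apply cont_g. lra. }
    { lra. } { lra. } { lra. }
    destruct (Ranalysis5.IVT_interv (fun t => gz t (INR a) (INR b)) zm zr) as [z2 [Hz2 E2]].
    { intros t Ht. apply cont_g. lra. }
    { lra. } { lra. } { lra. }
    cbv beta in E1, E2.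
    assert (z1 <> zl) by (intro; subst; lra).
    assert (z1 <> zm) by (intro; subst; lra).
    assert (z2 <> zm) by (intro; subst; lra).
    assert (z2 <> zr) by (intro; subst; lra).
    exists z1, z2. repeat split; try lra.
    intros z Hz Ez.
    destruct (Rle_lt_dec z zm) as [h|h].
    + left. destruct (Rtotal_order z z1) as [h1|[h1|h1]]; auto.
      * pose proof (Hdec z z1 ltac:(lra) h1 ltac:(lra)). lra.
      * pose proof (Hdec z1 z ltac:(lra) h1 h). lra.
    + right. destruct (Rtotal_order z z2) as [h1|[h1|h1]]; auto.
      * pose proof (Hinc z z2 ltac:(lra) h1 ltac:(lra)). lra.
      * pose proof (Hinc z2 z ltac:(lra) h1 ltac:(lra)). lra.
  - split.
    { intros z Hz. apply Hv. lra. }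
    set (Neg := fun n => (a < n)%nat /\ exists z, (0 < z /\ z < 1) /\ gz z (INR a) (INR n) < 0).
    assert (Hstep : forall n, Neg n -> Neg (S n)).
    { intros n [Hn [z [Hz Hg]]]. split; [lia|]. exists z. split; auto.
      assert (zl < z).
      { destruct (Rlt_le_dec zl z) as [h|h]; auto.
        assert (INR a < INR n) by (apply lt_INR; auto).
        pose proof (part_ii (INR a) (INR n) zl z ltac:(lra) ltac:(lra) Hzl Hfl ltac:(lra)). lra. }
      pose proof (Hv n z ltac:(lra)). replace (S n) with (n + 1)%nat by lia. lra. }
    assert (Hex : exists n, Neg n).
    { set (zs := (zl + 1)/2).
      pose proof (fdec zl zs ltac:(lra) ltac:(unfold zs; lra) ltac:(unfold zs; lra)).
      assert (E : fz zl * (INR a - 1) = 1) by (rewrite Hfl; field; lra).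
      set (s := (INR a - 1) * fz zs).
      assert (Hs : s < 1) by (unfold s; nra).
      set (c := 1 / (1 - zs)).
      set (q := (c + 1 - INR a) / (1 - s)).
      assert (Eq : q * (1 - s) = c + 1 - INR a) by (unfold q; field; lra).
      destruct (INR_unbounded (Rabs q + 1 + INR a)) as [n Hn].
      pose proof (Rle_abs q).
      assert (Hpos : 0 <= Rabs q) by apply Rabs_pos.
      exists n. split. { apply INR_lt. lra. }
      exists zs. split. unfold zs; lra.
      assert (Eg : gz zs (INR a) (INR n) = (INR n - 1) * (s - 1) + c + 1 - INR a)
        by (unfold gz, s, c; ring).
      rewrite Eg. nra. }
    destruct Hex as [n0 Hn0]. destruct (least_nat Neg n0 Hn0) as [m [Hm Hmin]].
    exists m. split. { destruct Hm; lia. } split.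
    + intros b0 Hb0 Hb0m z Hz. destruct (Rlt_le_dec (gz z (INR a) (INR b0)) 0) as [h|h]; [|lra].
      exfalso. assert (Neg b0) by (split; auto; exists z; auto). specialize (Hmin b0 H). lia.
    + intros b0 Hb0. assert (Neg b0).
      { induction Hb0; auto. }
      destruct H as [_ H]. exact H.
Qed.
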